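(* Let $P$ and $U$ be finite sets of points in $\mathbb{R}^d$ with $|P|=n_{\mathrm p}$, $|U|=n_{\mathrm u}$, let $\pi\in(0,1)$, $w_{\mathrm p}=\pi/n_{\mathrm p}$, $w_{\mathrm u}=1/n_{\mathrm u}$, and let $P'\subseteq P$, $U'\subseteq U$, not both empty. Let $W_{\mathrm p}=|P'|w_{\mathrm p}$, $W_{\mathrm n}=|U'|w_{\mathrm u}-|P'|w_{\mathrm p}$ and $v^*=\frac{W_{\mathrm p}}{W_{\mathrm p}+W_{\mathrm n}}$ (with $v^*=+\infty$ if $W_{\mathrm p}+W_{\mathrm n}=0$). For a loss $\ell$ define $$\hat R_{\mathrm{uPU}}(v;P',U')=\sum_{\mathbf{x}\in P'}w_{\mathrm p}\ell(v,+1)-\sum_{\mathbf{x}\in P'}w_{\mathrm p}\ell(v,-1)+\sum_{\mathbf{x}\in U'}w_{\mathrm u}\ell(v,-1),$$ $$\hat R_{\mathrm{nnPU}}(v;P',U')=\sum_{\mathbf{x}\in P'}w_{\mathrm p}\ell(v,+1)+\max\Bigl\{0,\sum_{\mathbf{x}\in U'}w_{\mathrm u}\ell(v,-1)-\sum_{\mathbf{x}\in P'}w_{\mathrm p}\ell(v,-1)\Bigr\}.$$ Suppose $\ell$ is any of the quadratic loss $(1-vy)^2$, the logistic loss $\ln(1+\exp(-vy))$, the savage loss $4/(1+\exp(vy))^2$, or the sigmoid loss $1/(1+\exp(vy))$. Then, for both $\hat R=\hat R_{\mathrm{uPU}}$ and $\hat R=\hat R_{\mathrm{nnPU}}$, the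 prediction $2\,\mathbb{1}(v^*>0.5)-1$ minimizes $\hat R(v;P',U')$ over $v\in\{-1,+1\}$.
   Context: $\mathbb{1}(\cdot)$ is the indicator function. The quantity $v^*$ is an estimate of the proportion of positive examples at a decision-tree node containing positive examples $P'$ and unlabeled examples $U'$. *)

(* Defs.v *)
From HB Require Import structures.
From mathcomp Require Import all_boot all_order all_algebra finmap.
From mathcomp Require Import all_classical all_reals all_analysis.
Set Implicit Arguments. Unset Strict Implicit. Unset Printing Implicit Defensive.
Import Order.TTheory GRing.Theory Num.Theory.
Local Open Scope ring_scope.

Section Defs.
Variable R : realType.

Definition quadratic_loss (v y : R) : R := (1 - v * y) ^+ 2.
Definition logistic_loss (v y : R) : R := ln (1 + expR (- (v * y))).
Definition savage_loss (v y : R) : R := 4 / (1 + expR (v * y)) ^+ 2.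
Definition sigmoid_loss (v y : R) : R := 1 / (1 + expR (v * y)).

Definition paper_loss (l : R -> R -> R) : Prop :=
  l = quadratic_loss \/ l = logistic_loss \/ l = savage_loss \/ l = sigmoid_loss.

Variable d : nat.
Notation pt := 'rV[R]_d.

Definition R_uPU (l : R -> R -> R) (wp wu : R) (P' U' : {fset pt}) (v : R) : R :=
  \sum_(x <- P') wp * l v 1 - \sum_(x <- P') wp * l v (-1)
  + \sum_(x <- U') wu * l v (-1).

Definition R_nnPU (l : R -> R -> R) (wp wu : R) (P' U' : {fset pt}) (v : R) : R :=
  \sum_(x <- P') wp * l v 1
  + Num.max 0 (\sum_(x <- U') wu * l v (-1) - \sum_(x <- P') wp * l v (-1)).

Definition vstar (Wp Wn : R) : \bar R :=
  if Wp + Wn == 0 then +oo%E else (Wp / (Wp + Wn))%:E.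

Definition prediction (vs : \bar R) : R :=
  2 * (if ((2^-1)%:E < vs)%E then 1 else 0) - 1.

End Defs.

(* Main.v *)
Require Import Defs.
From HB Require Import structures.
From mathcomp Require Import all_boot all_order all_algebra finmap.
From mathcomp Require Import all_classical all_reals all_analysis.
From mathcomp Require Import ring lra.
Import Order.TTheory GRing.Theory Num.Theory.
Local Open Scope ring_scope.

Lemma sum_constf (R : realType) (T : choiceType) (A : {fset T}) (c : R) :
  \sum_(x <- A) c = (#|` A|)%:R * c.
Proof.
rewrite card_fset_sum1 natr_sum mulr_suml; apply: eq_bigr => _ _.
by rewrite mul1r.
Qed.

Lemma loss_facts (R : realType) (l : R -> R -> R) : paper_loss l ->
  [/\ l (-1) (-1) = l 1 1, l (-1) 1 = l 1 (-1), 0 <= l 1 1 & l 1 1 <= l 1 (-1)].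
Proof.
have e1 : (-1) * (-1) = 1 :> R by rewrite mulN1r opprK.
have e2 : (-1) * 1 = -1 :> R by rewrite mulr1.
have e3 : 1 * (-1) = -1 :> R by rewrite mul1r.
have e4 : 1 * 1 = 1 :> R by rewrite mulr1.
have hE : expR (-1) <= expR (1 : R) by rewrite ler_expR; lra.
have hE0 : 0 < expR (-1 : R) by apply: expR_gt0.
case=> [->|[->|[->|->]]]; rewrite /quadratic_loss /logistic_loss /savage_loss
  /sigmoid_loss !(e1, e2, e3, e4); split => //.
- rewrite subrr opprK !expr2; lra.
- rewrite ln_ge0 //; lra.
- rewrite opprK ler_ln ?posrE; lra.
- rewrite ler_pdivrMr; last by rewrite expr2; apply: mulr_gt0; lra.
  rewrite mulrAC ler_pdivlMr; last by rewrite expr2; apply: mulr_gt0; lra.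
  rewrite ler_pM2l; last lra.
  rewrite ler_sqr ?nnegrE; lra.
- rewrite ler_pdivrMr; last lra.
  rewrite mulrAC ler_pdivlMr; last lra.
  rewrite !mul1r; lra.
Qed.

Theorem proposition4 (R : realType) (d : nat) (P U P' U' : {fset 'rV[R]_d})
  (pi : R) (l : R -> R -> R) :
  0 < pi < 1 ->
  (P' `<=` P)%fset -> (U' `<=` U)%fset ->
  (P' != fset0 \/ U' != fset0) ->
  paper_loss l ->
  let wp := pi / (#|` P|)%:R in
  let wu := 1 / (#|` U|)%:R in
  let Wp := (#|` P'|)%:R * wp in
  let Wn := (#|` U'|)%:R * wu - (#|` P'|)%:R * wp in
  let yhat := prediction (vstar Wp Wn) in
  forall v : R, (v = 1 \/ v = -1) ->
    R_uPU l wp wu P' U' yhat <= R_uPU l wp wu P' U' v /\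
    R_nnPU l wp wu P' U' yhat <= R_nnPU l wp wu P' U' v.
Proof.
move=> /andP[pi0 pi1] _ _ _ hl wp wu Wp Wn yhat v hv.
have [lmm lm1 L10 L12] := @loss_facts R l hl.
have wp0 : 0 <= wp by rewrite /wp divr_ge0 // ltW.
have wu0 : 0 <= wu by rewrite /wu divr_ge0.
have Wp0 : 0 <= Wp by rewrite /Wp mulr_ge0.
have B0 : 0 <= Wp + Wn by rewrite /Wn /Wp addrC subrK mulr_ge0.
have Hu : forall w, R_uPU l wp wu P' U' w =
    Wp * l w 1 + Wn * l w (-1).
  move=> w; rewrite /R_uPU !sum_constf /Wn /Wp; ring.
have Hn : forall w, R_nnPU l wp wu P' U' w =
    Wp * l w 1 + Num.max 0 (Wn * l w (-1)).
  move=> w; rewrite /R_nnPU !sum_constf /Wn /Wp; congr (_ + Num.max 0 _); ring.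
have hy : (yhat = 1 /\ Wn <= Wp) \/ (yhat = -1 /\ Wp <= Wn).
  rewrite /yhat /prediction /vstar.
  case: eqP => hB.
    left; split; first by rewrite ltry mulr1; lra.
    lra.
  have Bp : 0 < Wp + Wn by rewrite lt0r B0 andbT; apply/eqP.
  set x := Wp / (Wp + Wn).
  have hx : Wp = x * (Wp + Wn) by rewrite /x divfK //; apply/eqP.
  rewrite lte_fin; case: ltP => h.
    left; split; first by rewrite mulr1; lra.
    nra.
  right; split; first by rewrite mulr0; lra.
  nra.
set L1 := l 1 1 in L10 L12 lmm *; set L2 := l 1 (-1) in L12 lm1 *.
have m0 : forall a, 0 <= a -> Num.max 0 a = a by move=> a ha; exact: max_r.
have m1 : forall a, a <= 0 -> Num.max 0 a = 0 by move=> a ha; exact: max_l.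
have L20 : 0 <= L2 by lra.
have hL : 0 <= L2 - L1 by lra.
have hp : 0 <= Wp * (L2 - L1) by apply: mulr_ge0.
case: hy => [[-> hW]|[-> hW]]; case: hv => ->; rewrite !Hu !Hn ?lmm ?lm1 -/L1 -/L2.
- by split; lra.
- have h1 : 0 <= (Wp - Wn) * (L2 - L1) by apply: mulr_ge0; lra.
  split; first nra.
  have [hn|hn] := leP 0 Wn.
    have ? : 0 <= Wn * L1 by apply: mulr_ge0.
    have ? : 0 <= Wn * L2 by apply: mulr_ge0.
    rewrite !m0 //; nra.
  have ? : Wn * L1 <= 0 by apply: mulr_le0_ge0; lra.
  have ? : Wn * L2 <= 0 by apply: mulr_le0_ge0; lra.
  rewrite !m1 //; nra.
- have h1 : 0 <= (Wn - Wp) * (L2 - L1) by apply: mulr_ge0; lra.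
  have hn : 0 <= Wn by lra.
  have ? : 0 <= Wn * L1 by apply: mulr_ge0.
  have ? : 0 <= Wn * L2 by apply: mulr_ge0.
  rewrite !m0 //; split; nra.
- by split; lra.
Qed.
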